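(* Let $V$ be a finite set and $\mu\colon\binom V2\to\mathbb{Z}_+$ such that the graph $G(\mu)$ is connected. Let $V'\subseteq V$ be a nonempty subset such that the induced subgraph $G(\mu)|_{V'}$ is connected. Then $n(\mu,V)\geqslant n(\mu,V')$, where $n(\mu,V')$ is computed for the restriction of $\mu$ to $\binom{V'}{2}$.
   Context: $G(\mu)$ is the simple graph on $V$ whose edges are the pairs $e\in\binom V2$ with $\mu(e)>1$. For a finite set $W$ with $|W|=m$ and $\mu\colon\binom W2\to\mathbb{Z}_+$, $n(\mu,W)=\sum_{J\subseteq W,|J|\geqslant2}(-1)^{m-|J|}\prod_{e\in\binom J2}\mu(e)+(-1)^{m-1}(m-1)$ (the number of spheres in a wedge homotopy equivalent to the edge inflation of the simplex on $W$). *)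

(* Defs.v *)
From mathcomp Require Import all_boot all_order all_algebra.
Set Implicit Arguments. Unset Strict Implicit. Unset Printing Implicit Defensive.
Import GRing.Theory Num.Theory.
Local Open Scope ring_scope.

(* A multiplicity function mu : binom(V,2) -> Z_+ is modelled as a function
   on {set T}; only its values on 2-element sets matter. *)

Definition positive_mult (T : finType) (mu : {set T} -> nat) : Prop :=
  forall e : {set T}, #|e| = 2%N -> (0 < mu e)%N.

Definition Gmu_edge (T : finType) (mu : {set T} -> nat) : rel T :=
  fun x y => (x != y) && (1 < mu [set x; y])%N.

Definition induced_connected (T : finType) (mu : {set T} -> nat) (W : {set T})
  : Prop :=
  forall x y, x \in W -> y \in W ->
    exists p : seq T, [/\ path (Gmu_edge mu) x p, last x p = y & all (mem W) p].

Definition pairs (T : finType) (J : {set T}) : {set {set T}} :=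
  [set e in powerset J | #|e| == 2%N].

Definition nmu (T : finType) (mu : {set T} -> nat) (W : {set T}) : int :=
  let m := #|W| in
  \sum_(J in powerset W | (2 <= #|J|)%N)
      (-1) ^+ (m - #|J|) * (\prod_(e in pairs J) mu e)%:Z
  + (-1) ^+ (m.-1) * (m%:Z - 1).

(* Main.v *)
Require Import Defs.
From mathcomp Require Import all_boot all_order all_algebra.
From mathcomp Require Import ring zify.
Import Order.TTheory GRing.Theory Num.Theory.
Local Open Scope ring_scope.


Lemma sum_size {T : finType} (W : {set T}) (g : nat -> int) :
  \sum_(J in powerset W) g #|J| = \sum_(k < #|W|.+1) g k *+ 'C(#|W|, k).
Proof.
rewrite (partition_big (fun J : {set T} => (inord #|J| : 'I_(#|W|.+1))) predT) //.
apply: eq_bigr => k _.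
rewrite (eq_bigl (fun J => J \in [set A : {set T} | A \subset W & #|A| == k])); last first.
  move=> J /=; rewrite !inE.
  case: (boolP (J \subset W)) => //= sJ.
  have lt : (#|J| < #|W|.+1)%N by rewrite ltnS subset_leq_card.
  apply/eqP/eqP => [<-|H]; first by rewrite inordK.
  by apply: val_inj; rewrite /= inordK // H.
rewrite (eq_bigr (fun _ => g k)); last first.
  by move=> J; rewrite inE; case/andP => _ /eqP ->.
by rewrite sumr_const cards_draws.
Qed.

Lemma L_alt {T : finType} (K W : {set T}) : K \subset W ->
  \sum_(J in powerset W | K \subset J) (-1) ^+ (#|W| - #|J|) = (K == W)%:R :> int.
Proof.
move=> sKW.
have -> : \sum_(J in powerset W | K \subset J) (-1) ^+ (#|W| - #|J|) =
          \sum_(J in (fun L => K :|: L) @: powerset (W :\: K)) (-1) ^+ (#|W| - #|J|) :> int.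
  apply: eq_bigl => J /=; apply/andP/imsetP.
    rewrite powersetE => -[sJW sKJ]; exists (J :\: K).
      by rewrite powersetE setSD.
    apply/setP => x; rewrite !inE; case xK: (x \in K) => //=; by rewrite (subsetP sKJ x xK).
  case=> L; rewrite powersetE => sL ->; split.
    by rewrite powersetE subUset sKW (subset_trans sL) // subsetDl.
  exact: subsetUl.
rewrite big_imset; last first.
  move=> L1 L2; rewrite !powersetE => s1 s2 E.
  have dK : forall L : {set T}, L \subset W :\: K -> (K :|: L) :\: K = L.
    move=> L sL; rewrite setDUl setDv set0U; apply/setDidPl.
    rewrite disjoint_subset; apply: (subset_trans sL).
    by apply/subsetP => x; rewrite !inE; case/andP.
  by rewrite -(dK _ s1) -(dK _ s2) E.
have cU : forall L : {set T}, L \in powerset (W :\: K) -> #|K :|: L| = (#|K| + #|L|)%N.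
  move=> L; rewrite powersetE => sL; rewrite -cardsUI.
  suff -> : K :&: L = set0 by rewrite cards0 addn0.
  apply/setP => x; rewrite !inE; apply/andP => -[xK xL].
  by move/subsetP: sL => /(_ x xL); rewrite !inE xK.
transitivity (\sum_(L in powerset (W :\: K)) (-1) ^+ (#|W :\: K| - #|L|) : int).
  apply: eq_bigr => L HL; rewrite cU // cardsD (setIidPr sKW) subnDA //.
rewrite (sum_size _ (fun k => (-1) ^+ (#|W :\: K| - k))).
have -> : (K == W) = (#|W :\: K| == 0)%N.
  by rewrite cards_eq0 setD_eq0 eqEsubset sKW.
rewrite -expr0n -(addNr (1 : int)) exprDn.
by apply: eq_bigr => i _; rewrite expr1n mulr1.
Qed.

Definition aa {T : finType} (mu : {set T} -> nat) (e : {set T}) : int := (mu e)%:Z - 1.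

Lemma L_expand {T : finType} (mu : {set T} -> nat) (J : {set T}) :
  ((\prod_(e in pairs J) mu e)%N)%:Z =
  \sum_(F in powerset (pairs J)) \prod_(e in F) aa mu e.
Proof.
rewrite (big_morph Posz PoszM (erefl 1%:Z)).
rewrite big_mkcond /=.
rewrite (eq_bigr (fun e => (if e \in pairs J then aa mu e else 0) + 1)); last first.
  by move=> e _; case: ifP => _; rewrite ?add0r // /aa subrK.
rewrite bigA_distr.
rewrite (bigID (fun B : {set {set T}} => B \in powerset (pairs J))) /=.
rewrite [X in _ + X = _]big1 ?addr0; last first.
  move=> B; rewrite powersetE => /subsetPn [e eB eP].
  by rewrite (bigD1 e) //= eB (negPf eP) mul0r.
apply: eq_big => [B|B]; first by [].
rewrite powersetE => /subsetP sB.
rewrite [RHS]big_mkcond /=; apply: eq_bigr => e _.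
by case: ifP => // /sB ->.
Qed.

Lemma pairs_small {T : finType} (J : {set T}) : (#|J| < 2)%N -> pairs J = set0.
Proof.
move=> lt; apply/setP => e; rewrite !inE.
apply/negP => /andP [sE /eqP cE].
by move: (subset_leq_card sE); rewrite cE; move/leq_ltn_trans/(_ lt).
Qed.

Lemma L_step1 {T : finType} (mu : {set T} -> nat) (W : {set T}) : W != set0 ->
  nmu mu W = \sum_(J in powerset W) (-1) ^+ (#|W| - #|J|) *
                ((\prod_(e in pairs J) mu e)%N)%:Z.
Proof.
rewrite -card_gt0 /nmu => Wpos.
rewrite [RHS](bigID (fun J : {set T} => (2 <= #|J|)%N)) /=.
congr (_ + _).
transitivity (\sum_(J in powerset W) (fun k => if (k < 2)%N then (-1) ^+ (#|W| - k) else 0 : int) #|J|); last first.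
  rewrite big_mkcondr /=; apply: eq_bigr => J _; rewrite -ltnNge.
  by case: ifP => // H; rewrite pairs_small // big_set0 mulr1.
rewrite (sum_size _ (fun k => if (k < 2)%N then (-1) ^+ (#|W| - k) else 0 : int)).
move: Wpos; case: #|W| => // m _.
rewrite !big_ord_recl big1 /=; last by move=> i _; rewrite mul0rn.
rewrite /bump /= subn0 bin0 bin1 subSS subn0 addr0 exprS.
rewrite -[X in _ = _ + X]mulr_natr -[X in _ = X + _]mulr_natr.
rewrite -[(m.+1)%:Z]natz.
ring.
Qed.

Definition cover {T : finType} (F : {set {set T}}) : {set T} := \bigcup_(e in F) e.

Lemma pairs_key {T : finType} (J W : {set T}) (F : {set {set T}}) : J \subset W ->
  (F \in powerset (pairs J)) = (F \in powerset (pairs W)) && (cover F \subset J).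
Proof.
move=> sJW; rewrite !powersetE; apply/idP/andP.
  move=> sFJ; split.
    apply/subsetP => e /(subsetP sFJ); rewrite !inE => /andP [sE ->].
    by rewrite (subset_trans sE sJW).
  apply/bigcupsP => e /(subsetP sFJ); by rewrite !inE => /andP[].
move=> [sFW sC]; apply/subsetP => e eF.
move: (subsetP sFW e eF); rewrite !inE => /andP[_ ->]; rewrite andbT.
apply: subset_trans sC; exact: (bigcup_sup e eF).
Qed.

Lemma L_nmu {T : finType} (mu : {set T} -> nat) (W : {set T}) : W != set0 ->
  nmu mu W = \sum_(F in powerset (pairs W) | cover F == W) \prod_(e in F) aa mu e.
Proof.
move=> W0; rewrite L_step1 //.
under eq_bigr => J _ do rewrite L_expand mulr_sumr.
transitivity (\sum_(J in powerset W) \sum_(F in powerset (pairs W) | cover F \subset J)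
   (-1) ^+ (#|W| - #|J|) * \prod_(e in F) aa mu e).
  apply: eq_bigr => J; rewrite powersetE => sJ; apply: eq_bigl => F.
  exact: pairs_key.
rewrite (exchange_big_dep (fun F => F \in powerset (pairs W))) /=; last by move=> J F _ /andP[].
rewrite [RHS]big_mkcondr /=; apply: eq_bigr => F HF.
have sC : cover F \subset W.
  apply/bigcupsP => e eF; move: HF; rewrite powersetE => /subsetP /(_ e eF).
  by rewrite !inE => /andP[].
rewrite (eq_bigl (fun J => (J \in powerset W) && (cover F \subset J))); last first.
  by move=> J; rewrite HF.
rewrite -mulr_suml L_alt //.
by case: (cover F == W); rewrite ?mul1r ?mul0r.
Qed.
Arguments aa {T}. Arguments cover {T}. Arguments pairs_key {T J W F}. Arguments L_nmu {T}.

Theorem lemma4p14 (T : finType) (mu : {set T} -> nat) (V' : {set T}) :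
  positive_mult mu ->
  induced_connected mu [set: T] ->
  V' != set0 ->
  induced_connected mu V' ->
  nmu mu V' <= nmu mu [set: T].
Proof.
move=> Hpos Hconn V0 _.
have T0 : [set: T] != set0.
  by case/set0Pn: V0 => x _; apply/set0Pn; exists x; rewrite inE.
rewrite !L_nmu //.
pose nb := fun v => odflt v [pick u | Gmu_edge mu v u].
have Hnb : forall v, v \notin V' -> Gmu_edge mu v (nb v).
  move=> v vV; case/set0Pn: V0 => x xV.
  have [p [Hp Hl _]] := Hconn v x (in_setT v) (in_setT x).
  case: p Hp Hl => [_ /= Hvx|u p /= /andP[Hvu _] _].
    by move: vV; rewrite Hvx xV.
  rewrite /nb; case: pickP => [u' Hu'|H] //=.
  by rewrite H in Hvu.
pose S := [set [set v; nb v] | v in ~: V'].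
have aS : forall e, e \in S -> 1 <= aa mu e.
  move=> e /imsetP [v vV ->]; rewrite inE in vV.
  have := Hnb v vV; rewrite /Gmu_edge => /andP[_ H].
  rewrite /aa; lia.
have a0 : forall e : {set T}, #|e| = 2%N -> 0 <= aa mu e.
  move=> e /Hpos H; rewrite /aa; lia.
have Spairs : forall e, e \in S -> e \in pairs [set: T].
  move=> e /imsetP [v vV ->]; rewrite inE in vV.
  have := Hnb v vV; rewrite /Gmu_edge => /andP[H _].
  by rewrite !inE subsetT cards2 H.
have disj : forall F, F \in powerset (pairs V') -> [disjoint F & S].
  move=> F; rewrite powersetE => sF; rewrite disjoints_subset.
  apply/subsetP => e eF; rewrite inE; apply/negP => /imsetP [v vV Ev].
  rewrite inE in vV; move: (subsetP sF e eF); rewrite !inE => /andP[sE _].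
  by move: (subsetP sE v); rewrite Ev set21 => /(_ isT); rewrite (negPf vV).
have wS : 1 <= \prod_(e in S) aa mu e.
  apply: (big_ind (fun x => 1 <= x)) => //; first by move=> x y; apply: mulr_ege1.
have w0 : forall (W : {set T}) F, F \in powerset (pairs W) -> 0 <= \prod_(e in F) aa mu e.
  move=> W F; rewrite powersetE => sF; apply: prodr_ge0 => e eF.
  by move: (subsetP sF e eF); rewrite !inE => /andP[_ /eqP /a0].
apply: (le_trans (y := \sum_(F in powerset (pairs V') | cover F == V') \prod_(e in F :|: S) aa mu e)).
  apply: ler_sum => F /andP[HF _].
  rewrite [X in _ <= X](eq_bigl (fun e => e \in [predU F & S])); last by move=> e; rewrite !inE.
  rewrite bigU; last exact: disj.
  by apply: ler_peMr => //; apply: w0 HF.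
pose A' := [set F in powerset (pairs V') | cover F == V'].
rewrite (eq_bigl (fun F => F \in A')); last by move=> F; rewrite !inE.
rewrite -(@big_imset _ _ _ _ _ (fun F => F :|: S) (mem A') (fun G => \prod_(e in G) aa mu e)); last first.
  move=> F1 F2; rewrite !inE => /andP[H1 _] /andP[H2 _] /= E.
  have dF : forall F, F \in powerset (pairs V') -> (F :|: S) :\: S = F.
    by move=> F HF; rewrite setDUl setDv setU0; apply/setDidPl; apply: disj.
  by rewrite -(dF F1) ?powersetE // -(dF F2) ?powersetE // E.
set imS := (fun F => F :|: S) @: A'.
rewrite [X in _ <= X](bigID (fun G => G \in imS)) /=.
have -> : \sum_(G | ((G \in powerset (pairs [set: T])) && (cover G == [set: T])) && (G \in imS))
            \prod_(e in G) aa mu e = \sum_(G in imS) \prod_(e in G) aa mu e.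
  apply: eq_bigl => G; case GI: (G \in imS); rewrite ?andbF ?andbT //=.
  case/imsetP: GI => F; rewrite inE => /andP[HF /eqP CF] ->.
  apply/andP; split.
    rewrite powersetE subUset; apply/andP; split.
      by move: HF; rewrite (pairs_key (subsetT V')) powersetE => /andP[].
    by apply/subsetP => e /Spairs.
  rewrite eqEsubset subsetT /=; apply/subsetP => x _.
  rewrite /cover bigcup_setU inE.
  case xV: (x \in V').
    by rewrite -CF in xV; rewrite xV.
  apply/orP; right; apply/bigcupP; exists [set x; nb x]; last exact: set21.
  by apply/imsetP; exists x; rewrite // inE xV.
rewrite lerDl; apply: sumr_ge0 => G /andP[/andP[HG _] _].
exact: w0 HG.
Qed.
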